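(* Let $(A,\circ)$ be a right normal band. If every two elements $s,t\in A$ have a greatest lower bound $s\wedge t$ with respect to the natural order $\le$, then $(A,\circ,\wedge)$ is a right normal band with intersection. Conversely, if $(A,\circ,\cap)$ is a right normal band with intersection, then $s\cap t$ is the greatest lower bound of $s,t$ with respect to $\le$. Consequently, an algebra $(A,\circ,\cap)$ is a right normal band with intersection if and only if $(A,\circ)$ is a right normal band and for all $x,y,z\in A$: $x=x\circ y$ and $x=x\circ z$ hold if and only if $x=x\circ(y\cap z)$.
   Context: A right normal band is a semigroup $(A,\circ)$ with $x\circ x=x$ and $(x\circ y)\circ z=(y\circ x)\circ z$. Its natural order is $x\le y$ iff $x=x\circ y$. A right normal band with intersection $(A,\circ,\cap)$: $(A,\circ)$ a right normal band, $(A,\cap)$ a semilattice (associative, commutative, idempotent), $(x\cap y)\circ x=x\cap y$ and $x\circ(y\cap z)=(x\circ y)\cap z$ for all $x,y,z$. *)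

(* Defs.v *)
Definition right_normal_band {A : Type} (op : A -> A -> A) : Prop :=
  (forall x y z, op x (op y z) = op (op x y) z) /\
  (forall x, op x x = x) /\
  (forall x y z, op (op x y) z = op (op y x) z).

Definition nat_le {A : Type} (op : A -> A -> A) (x y : A) : Prop := x = op x y.

Definition is_glb {A : Type} (op : A -> A -> A) (g s t : A) : Prop :=
  nat_le op g s /\ nat_le op g t /\
  (forall l, nat_le op l s -> nat_le op l t -> nat_le op l g).

Definition semilattice {A : Type} (cap : A -> A -> A) : Prop :=
  (forall x y z, cap x (cap y z) = cap (cap x y) z) /\
  (forall x y, cap x y = cap y x) /\
  (forall x, cap x x = x).

Definition rnb_with_intersection {A : Type} (op cap : A -> A -> A) : Prop :=
  right_normal_band op /\ semilattice cap /\
  (forall x y, op (cap x y) x = cap x y) /\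
  (forall x y z, op x (cap y z) = cap (op x y) z).

(* Main.v *)
Require Import Defs.
From Stdlib Require Import Setoid.

Lemma le_trans' {A} (op : A -> A -> A) : right_normal_band op ->
  forall x y z, nat_le op x y -> nat_le op y z -> nat_le op x z.
Proof.
  intros [As [Id Rn]] x y z H1 H2; unfold nat_le in *.
  rewrite H1 at 2. rewrite <- As, <- H2. exact H1.
Qed.

Lemma le_antisym {A} (op : A -> A -> A) : right_normal_band op ->
  forall x y, nat_le op x y -> nat_le op y x -> x = y.
Proof.
  intros [As [Id Rn]] x y H1 H2; unfold nat_le in *.
  transitivity (op x (op y x)); [rewrite <- H2; exact H1|].
  rewrite As, Rn, <- As, Id. symmetry; exact H2.
Qed.

Lemma le_refl' {A} (op : A -> A -> A) : right_normal_band op ->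
  forall x, nat_le op x x.
Proof. intros [As [Id Rn]] x; unfold nat_le; rewrite Id; reflexivity. Qed.

Lemma glb_uniq {A} (op : A -> A -> A) : right_normal_band op ->
  forall g h s t, is_glb op g s t -> is_glb op h s t -> g = h.
Proof.
  intros R g h s t [G1 [G2 G3]] [H1 [H2 H3]].
  apply (le_antisym op R); auto.
Qed.

Lemma part1 (A : Type) (op meet : A -> A -> A) :
      right_normal_band op ->
      (forall s t, is_glb op (meet s t) s t) ->
      rnb_with_intersection op meet.
Proof.
  intros R G. pose proof R as R'. destruct R' as [As [Id Rn]].
  assert (Tr := le_trans' op R). assert (Rf := le_refl' op R).
  assert (U := glb_uniq op R).
  split; [exact R|]. split; [split; [|split]|split].
  - intros x y z. apply (U _ _ x (meet y z) (G _ _)).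
    destruct (G y z) as [a1 [a2 a3]]. destruct (G x (meet y z)) as [b1 [b2 b3]].
    destruct (G x y) as [c1 [c2 c3]]. destruct (G (meet x y) z) as [d1 [d2 d3]].
    split; [eauto|split].
    + apply a3; eauto.
    + intros l H1 H2. apply d3; eauto.
  - intros x y. apply (U _ _ x y (G _ _)).
    destruct (G y x) as [a1 [a2 a3]]. split; [auto|split; auto].
  - intros x. apply (U _ _ x x (G _ _)). split; [auto|split; auto].
  - intros x y. destruct (G x y) as [a1 _]. symmetry; exact a1.
  - intros x y z. apply (U _ _ (op x y) z); [|apply G].
    set (m := meet y z). destruct (G y z) as [a1 [a2 a3]]. fold m in a1, a2, a3.
    split; [|split].
    + unfold nat_le.
      transitivity (op (op (op x m) x) y); [| now rewrite As].
      replace (op (op x m) x) with (op m x).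
      2:{ rewrite Rn, <- As, Id. reflexivity. }
      rewrite Rn, <- As, <- a1. reflexivity.
    + unfold nat_le. rewrite <- As, <- a2. reflexivity.
    + intros l H1 H2. unfold nat_le in *.
      assert (Hly : l = op l y).
      { rewrite H1 at 2. rewrite <- As, <- As, Id, <- H1. reflexivity. }
      assert (Hxl : op x l = l).
      { rewrite H1 at 2. rewrite As, Rn, <- As, <- Hly. reflexivity. }
      assert (Hlm : l = op l m) by (apply a3; assumption).
      rewrite As, Rn, <- As, <- Hlm, Hxl. reflexivity.
Qed.

Lemma part2 (A : Type) (op cap : A -> A -> A) :
      rnb_with_intersection op cap ->
      forall s t, is_glb op (cap s t) s t.
Proof.
  intros [R [[Ca [Cc Ci]] [Ab Di]]] s t.
  split; [|split]; unfold nat_le.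
  - symmetry; apply Ab.
  - rewrite Cc. symmetry; apply Ab.
  - intros l H1 H2. rewrite Di, <- H1.
    pose proof (Di l t t) as E. rewrite Ci, <- H2 in E. exact E.
Qed.

Theorem proposition5p1 :
  (forall (A : Type) (op meet : A -> A -> A),
      right_normal_band op ->
      (forall s t, is_glb op (meet s t) s t) ->
      rnb_with_intersection op meet) /\
  (forall (A : Type) (op cap : A -> A -> A),
      rnb_with_intersection op cap ->
      forall s t, is_glb op (cap s t) s t) /\
  (forall (A : Type) (op cap : A -> A -> A),
      rnb_with_intersection op cap <->
      (right_normal_band op /\
       forall x y z, (x = op x y /\ x = op x z) <-> x = op x (cap y z))).
Proof.
  split; [exact part1|]. split; [exact part2|].
  intros A op cap. split.
  - intros H. pose proof (part2 A op cap H) as G. destruct H as [R _].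
    split; [exact R|]. intros x y z. destruct (G y z) as [a1 [a2 a3]].
    split.
    + intros [h1 h2]. apply a3; assumption.
    + intros h. split; [apply (le_trans' op R _ _ _ h a1)|apply (le_trans' op R _ _ _ h a2)].
  - intros [R E]. apply part1; [exact R|]. intros s t.
    assert (Rf := le_refl' op R).
    destruct (proj2 (E (cap s t) s t) (Rf _)) as [h1 h2].
    split; [exact h1|split; [exact h2|]].
    intros l H1 H2. apply E; split; assumption.
Qed.
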